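(* Let $T$ be a tree with $ex(T)\ge1$, and let $g:V(T)\rightarrow [0,1]$ be any minimum resolving function of $T$. If $x$ is a major vertex, an interior degree-two vertex, or a vertex belonging to $T_v$ for some $v\in M_1(T)$, then $g(x)=0$.
   Context: $d(x,y)$ is the distance in the tree. For a function $g$ on $V(T)$ and $U\subseteq V(T)$, $g(U)=\sum_{s\in U}g(s)$. $R\{x,y\}=\{z: d(x,z)\ne d(y,z)\}$; $g:V(T)\to[0,1]$ is a resolving function if $g(R\{x,y\})\ge1$ for all distinct $x,y$; $\dim_f(T)$ is the minimum of $g(V(T))$ over resolving functions, and a minimum resolving function attains it. A leaf has degree one; a major vertex has degree at least three. A leaf $\ell$ is a terminal vertex of a major vertex $v$ if $d(\ell,v)<d(\ell,w)$ for every other major vertex $w$; $ter(v)$ is the number of terminal vertices of $v$; an exterior major vertex is a major vertex with $ter(v)>0$. $M(T)$ is the set of exterior major vertices, $ex(T)=|M(T)|$, $M_1(T)=\{w\in M(T): ter(w)=1\}$. For $v\in M(T)$, $T_v$ is the subtree induced by $v$ and all vertices on the paths joining $v$ to its terminal vertices. An interior degree-two vertex is a vertex of degree $2$ such that the shortest path from it to any terminal vertex includes a major vertex. *)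

(* Defs.v *)
From HB Require Import structures.
From mathcomp Require Import all_boot all_order all_algebra.
From mathcomp Require Import reals.
Set Implicit Arguments. Unset Strict Implicit. Unset Printing Implicit Defensive.
Import Order.TTheory GRing.Theory Num.Theory.

Section Graph.
Variables (T : finType) (e : rel T).

Definition simple_graph : Prop := symmetric e /\ irreflexive e.

Fixpoint ball (n : nat) (x : T) : {set T} :=
  match n with
  | 0 => [set x]
  | n'.+1 => ball n' x :|: [set z | [exists w in ball n' x, e w z]]
  end.

(* graph distance: least n with y in ball n x (searched below #|T|, which
   suffices for connected graphs; returns #|T| otherwise) *)
Definition dist (x y : T) : nat := find (fun n => y \in ball n x) (iota 0 #|T|).

Definition connected_graph : Prop := forall x y : T, connect e x y.

Definition acyclic_graph : Prop :=
  ~ exists p : seq T, [/\ uniq p, 2 < size p & cycle e p].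

Definition is_tree : Prop := [/\ simple_graph, connected_graph & acyclic_graph].

Definition deg (x : T) : nat := #|[set y | e x y]|.
Definition leaf (x : T) : bool := deg x == 1.
Definition major (x : T) : bool := 2 < deg x.

Definition terminal (l v : T) : bool :=
  [&& leaf l, major v &
      [forall w, (major w && (w != v)) ==> (dist l v < dist l w)]].

Definition ter (v : T) : nat := #|[set l | terminal l v]|.

Definition exterior_major (v : T) : bool := major v && (0 < ter v).

Definition ex_T : nat := #|[set v | exterior_major v]|.

Definition in_M1 (v : T) : bool := exterior_major v && (ter v == 1).

(* z lies on the (unique) path joining x and y in the tree *)
Definition on_path (x y z : T) : bool := dist x z + dist z y == dist x y.

Definition in_Tv (v x : T) : bool :=
  (x == v) || [exists l, terminal l v && on_path v l x].

Definition is_terminal_vertex (l : T) : bool := [exists v, terminal l v].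

Definition interior_deg2 (x : T) : bool :=
  (deg x == 2) &&
  [forall l, is_terminal_vertex l ==>
     [exists w, major w && on_path x l w]].

Definition resolving {R : realType} (g : T -> R) : Prop :=
  (forall z, 0 <= g z <= 1)%R /\
  (forall x y : T, x != y -> (1 <= \sum_(z | dist x z != dist y z) g z)%R).

Definition min_resolving {R : realType} (g : T -> R) : Prop :=
  resolving g /\
  (forall h : T -> R, resolving h -> (\sum_z g z <= \sum_z h z)%R).

End Graph.

(* Main.v *)
Require Import Defs.
From HB Require Import structures.
From mathcomp Require Import all_boot all_order all_algebra.
From mathcomp Require Import reals zify lra.
Import Order.TTheory GRing.Theory Num.Theory.
Set Implicit Arguments. Unset Strict Implicit.

Section TreeFacts.
Variables (T : finType) (e : rel T).
Hypotheses (esym : symmetric e) (eirr : irreflexive e)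
  (econn : connected_graph e) (eacyc : acyclic_graph e).

Local Notation dist := (dist e).
Local Notation ball := (ball e).

Lemma ballS y n x : (y \in ball n.+1 x) = (y \in ball n x) || [exists w in ball n x, e w y].
Proof. by rewrite /= !inE. Qed.

Lemma ball_mono m n x : m <= n -> ball m x \subset ball n x.
Proof.
elim: n => [|n IH]; first by rewrite leqn0 => /eqP ->.
rewrite leq_eqVlt => /orP [/eqP -> //| /IH H].
apply: subset_trans H _; exact: subsetUl.
Qed.

Lemma ball_nbr y w k : e y w -> ball k w \subset ball k.+1 y.
Proof.
move=> eyw; elim: k => [|k IH].
  apply/subsetP => z; rewrite inE => /eqP ->; rewrite ballS; apply/orP; right.
  by apply/existsP; exists y; rewrite inE eqxx.
apply/subsetP => z; rewrite ballS => /orP [zk | /existsP [u /andP [uk euz]]].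
  by apply: (subsetP (ball_mono _ (leqnSn _))); exact: (subsetP IH).
rewrite ballS; apply/orP; right; apply/existsP; exists u.
by rewrite (subsetP IH).
Qed.

Lemma path_ball x p : path e x p -> last x p \in ball (size p) x.
Proof.
elim: p x => [|u p IH] x /=; first by rewrite inE.
by move=> /andP [exu /IH H]; apply: (subsetP (ball_nbr _ exu)).
Qed.

Lemma conn_ball x y : exists2 n, n < #|T| & y \in ball n x.
Proof.
have /connectP [p pp ->] := econn x y.
case: (shortenP pp) => p' pp' up' _.
apply: (@ex_intro2 _ _ _ (size p')); last by apply: path_ball.
by have := card_uniqP up'; rewrite /= => <-; apply: max_card.
Qed.

Lemma dist_ball x y n : (y \in ball n x) = (dist x y <= n).
Proof.
have hasb : has (fun n => y \in ball n x) (iota 0 #|T|).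
  case: (conn_ball x y) => m lt_m ym; apply/hasP; exists m => //.
  by rewrite mem_iota.
have lt := hasb; rewrite has_find size_iota in lt.
have := nth_find 0 hasb; rewrite nth_iota // add0n => yd.
rewrite /Defs.dist; apply/idP/idP => H.
  rewrite leqNgt; apply/negP => lt2.
  have := before_find 0 lt2; rewrite nth_iota ?add0n ?H //.
  exact: ltn_trans lt2 lt.
exact: (subsetP (ball_mono _ H)).
Qed.


Lemma dist_le x y n : y \in ball n x -> dist x y <= n.
Proof. by rewrite dist_ball. Qed.

Lemma dist_in x y : y \in ball (dist x y) x.
Proof. by rewrite dist_ball. Qed.

Lemma dist0 x : dist x x = 0.
Proof. by apply/eqP; rewrite -leqn0 -dist_ball inE. Qed.

Lemma dist0_eq x y : dist x y = 0 -> x = y.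
Proof. by move=> h; have := dist_in x y; rewrite h inE => /eqP. Qed.

Lemma dist_eq0 x y : (dist x y == 0) = (x == y).
Proof.
by apply/eqP/eqP => [/dist0_eq //|->]; rewrite dist0.
Qed.

Lemma dist_lip2 x u w : e u w -> dist x w <= (dist x u).+1.
Proof.
move=> euw; apply: dist_le; rewrite ballS; apply/orP; right.
by apply/existsP; exists u; rewrite dist_in.
Qed.

Lemma dist_lip1 y w z : e y w -> dist y z <= (dist w z).+1.
Proof.
move=> eyw; apply: dist_le; apply: (subsetP (ball_nbr _ eyw)); exact: dist_in.
Qed.

Lemma dist_parent0 x y : x != y -> exists2 w, e w y & (dist x w).+1 = dist x y.
Proof.
move=> nxy; case E: (dist x y) => [|n].
  by move/dist0_eq: E => /eqP; rewrite (negbTE nxy).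
have := dist_in x y; rewrite E ballS => /orP [|/existsP [w /andP [wn ewy]]].
  by rewrite dist_ball E ltnn.
exists w => //; apply/eqP; rewrite eqn_leq -E dist_lip2 //= andbT.
by rewrite E ltnS -dist_ball.
Qed.

Lemma distC x y : dist x y = dist y x.
Proof.
suff H : forall x y, dist y x <= dist x y by apply/eqP; rewrite eqn_leq !H.
move=> a b; move E: (dist a b) => n; elim: n b E => [|n IH] b E.
  by rewrite (dist0_eq E) dist0.
have nab : a != b by rewrite -dist_eq0 E.
have [w ewb Ew] := dist_parent0 nab.
have Hw : dist w a <= n by apply: IH; apply: succn_inj; rewrite Ew.
apply: leq_trans (dist_lip1 _ _) _; first by rewrite esym; exact: ewb.
by [].
Qed.

Lemma dist_parent u z : u != z -> exists2 w, e u w & (dist w z).+1 = dist u z.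
Proof.
rewrite eq_sym => nzu; have [w ewu E] := dist_parent0 nzu.
by exists w; [rewrite esym | rewrite distC (distC u)].
Qed.

Lemma dist_tri x y z : dist x z <= dist x y + dist y z.
Proof.
move E: (dist y z) => n; elim: n z E => [|n IH] z E.
  by rewrite (dist0_eq E) addn0.
have nyz : y != z by rewrite -dist_eq0 E.
have [w ewz Ew] := dist_parent0 nyz.
have Hw := IH w (succn_inj (etrans Ew E)).
apply: leq_trans (dist_lip2 _ ewz) _; rewrite addnS ltnS; exact: Hw.
Qed.

Lemma dist_edge u w : e u w -> dist u w = 1.
Proof.
move=> euw; apply/eqP; rewrite eqn_leq; apply/andP; split.
  by have := dist_lip2 u euw; rewrite dist0.
by rewrite lt0n dist_eq0; apply/eqP => h; move: euw; rewrite h eirr.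
Qed.

Lemma noL y c c' p : e y c -> e y c' -> c != c' -> path e c p -> last c p = c' ->
  y \notin (c :: p) -> False.
Proof.
move=> eyc eyc' ncc' pc; move: ncc'.
case: (shortenP pc) => p' pp' up' sub' ncc' lp' ynot.
apply: eacyc; exists (y :: c :: p'); split.
- rewrite /= in up' *; rewrite up' andbT.
  rewrite inE negb_or; apply/andP; split.
    by apply: contra ynot => /eqP ->; rewrite mem_head.
  apply/negP => /sub' yp; move: ynot; rewrite inE yp orbT //.
- case: p' pp' up' sub' ncc' lp' => [|u p'] //= _ _ _ ncc' lp'.
  by move: ncc'; rewrite lp' eqxx.
- rewrite /cycle /= eyc rcons_path pp' /= lp' esym; exact: eyc'.
Qed.

Lemma walk z K u u' : dist u z <= K -> dist u' z <= K ->
  exists p, [/\ path e u p, last u p = u' & all (fun w => dist w z <= K) p].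
Proof.
move: {2}(dist u z + dist u' z) (leqnn (dist u z + dist u' z)) => n.
elim: n u u' => [|n IH] u u' Hn Hu Hu'.
  have h1 : dist u z = 0 by lia. have h2 : dist u' z = 0 by lia.
  by exists [::]; split => //=; rewrite (dist0_eq h1) (dist0_eq h2).
case: (eqVneq u u') => [<-|nuu']; first by exists [::].
case: (eqVneq u z) => [uz|nuz].
  have nu'z : u' != z by rewrite -uz eq_sym.
  have [w' ew' Ew'] := dist_parent nu'z.
  have [|||p [pp lp ap]] := IH u w'; try lia.
  exists (rcons p u'); split.
  - by rewrite rcons_path pp lp esym.
  - by rewrite last_rcons.
  - by rewrite all_rcons Hu' /=.
have [w ew Ew] := dist_parent nuz.
have [|||p [pp lp ap]] := IH w u'; try lia.
exists (w :: p); split => /=; [by rewrite ew pp | by [] | rewrite ap andbT; lia].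
Qed.

Lemma nbr_neq y c z : e y c -> dist c z != dist y z.
Proof.
move=> eyc; apply/eqP => E.
case: (eqVneq y z) => [yz|nyz].
  by move: E; rewrite yz dist0 => /dist0_eq cz; move: eyc; rewrite yz cz eirr.
have ncz : c != z by rewrite -dist_eq0 E dist_eq0.
have [y1 ey1 Ey1] := dist_parent nyz.
have [c1 ec1 Ec1] := dist_parent ncz.
have [||p [pp lp ap]] := @walk z (dist y z - 1) c1 y1; try lia.
apply: (noL (p := c1 :: p) eyc ey1) => //.
- apply/eqP => cy1; move: Ey1; rewrite -cy1 E; lia.
- by rewrite /= ec1 pp.
- rewrite !inE !negb_or; apply/and3P; split.
  + by apply/eqP => yc; move: eyc; rewrite yc eirr.
  + apply/eqP => yc1; move: Ec1; rewrite -yc1 E; lia.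
  + apply/negP => yp; move/allP: ap => /(_ y yp); lia.
Qed.

Lemma parent_uniq y c c' z : e y c -> e y c' -> dist c z < dist y z ->
  dist c' z < dist y z -> c = c'.
Proof.
move=> eyc eyc' hc hc'; apply/eqP; apply/negPn/negP => ncc.
have [||p [pp lp ap]] := @walk z (dist y z - 1) c c'; try lia.
apply: (noL eyc eyc' ncc pp lp).
rewrite inE negb_or; apply/andP; split.
  apply/eqP => yc; move: hc; rewrite yc; lia.
apply/negP => yp; move/allP: ap => /(_ y yp); lia.
Qed.

Lemma nbr_dist y c z : e y c -> dist c z = (dist y z).+1 \/ dist y z = (dist c z).+1.
Proof.
move=> eyc; have h1 := dist_lip1 z eyc.
have eyc' : e c y by rewrite esym.
have h2 := dist_lip1 z eyc'; have := nbr_neq z eyc; lia.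
Qed.

Lemma nbr_far y c c' z : e y c -> e y c' -> dist c z < dist y z -> c' != c ->
  dist c' z = (dist y z).+1.
Proof.
move=> eyc eyc' hc nc; case: (nbr_dist z eyc') => // h.
by move: nc; rewrite (parent_uniq eyc' eyc _ hc) ?eqxx //; lia.
Qed.

Definition side v a := [set u | dist u a < dist u v].

Lemma side_a v a : e v a -> a \in side v a.
Proof. by move=> eva; rewrite inE dist0 distC dist_edge. Qed.

Lemma side_v v a : v \notin side v a.
Proof. by rewrite inE dist0. Qed.

Lemma notside v a u : e v a -> u \notin side v a -> dist u a = (dist u v).+1.
Proof.
move=> eva; rewrite inE -leqNgt => h.
case: (nbr_dist u eva); rewrite (distC a) (distC v) //; lia.
Qed.

Lemma inside v a u : e v a -> u \in side v a -> dist u v = (dist u a).+1.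
Proof.
move=> eva; rewrite inE => h.
case: (nbr_dist u eva); rewrite (distC a) (distC v) //; lia.
Qed.

Lemma side_exit v a u w : e v a -> u \in side v a -> e u w -> w \notin side v a ->
  u = a /\ w = v.
Proof.
move=> eva us euw wn.
have Hu := inside eva us; have Hw := notside eva wn.
have A1 := nbr_dist a euw; have A2 := nbr_dist v euw.
have Hwv : dist w v = dist u a by lia.
case E: (dist u a) => [|t].
  have ua := dist0_eq E; rewrite E in Hwv; have wv := dist0_eq Hwv; by [].
have nua : u != a by rewrite -dist_eq0 E.
have [u' eu' Eu'] := dist_parent nua.
have nu'w : u' != w by apply/eqP => h; move: Eu'; rewrite h; lia.
have := nbr_far (z := v) euw eu' (ltac:(lia)) nu'w.
have := dist_tri u' a v; rewrite (distC a) (dist_edge eva); lia.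
Qed.

Lemma side_through v a z y : e v a -> z \in side v a -> y \notin side v a ->
  dist z y = dist z v + dist v y.
Proof.
move=> eva; move E: (dist z y) => n; elim: n z E => [|n IH] z E zs yn.
  by move: zs; rewrite (dist0_eq E) (negbTE yn).
have nzy : z != y by rewrite -dist_eq0 E.
have [w ezw Ew] := dist_parent nzy.
case: (boolP (w \in side v a)) => ws.
  have Hw := IH w (succn_inj (etrans Ew E)) ws yn.
  have := dist_lip1 v ezw; have := dist_tri z v y; lia.
have [za wv] := side_exit eva zs ezw ws.
rewrite za distC (dist_edge eva); rewrite -wv; lia.
Qed.

Lemma side_disj v a b u : e v a -> e v b -> a != b -> u \in side v a -> u \in side v b -> False.
Proof.
move=> eva evb nab; rewrite !inE => ha hb.
move: nab; rewrite (parent_uniq (z := u) eva evb) ?eqxx //.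
  by rewrite distC (distC v u).
by rewrite distC (distC v u).
Qed.


Local Notation major := (major e).
Local Notation leaf := (leaf e).

Definition Amaj v a := e v a && [forall u, (u \in side v a) ==> ~~ major u].
Definition Aset v := [set a | Amaj v a].
Definition Qv v := major v && (1 < #|Aset v|).
Definition Wset := [set a | [exists v, Qv v && (a \in Aset v)]].

Lemma nbrs_card w : #|[set y | e w y]| = deg e w.
Proof. by []. Qed.

Lemma side_nbr m c w a : e m c -> w \in side m c -> e w a -> a != m ->
  a \in side m c.
Proof.
move=> emc ws ewa nam; apply/negPn/negP => an.
by have [_ am] := side_exit emc ws ewa an; move: nam; rewrite am eqxx.
Qed.

Lemma side_far v a u z : e v a -> z \notin side v a -> u \in side v a ->
  dist z v < dist z u.
Proof.
move=> eva zn us; rewrite distC (distC z u) (side_through eva us zn).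
have : u != v by apply/eqP => uv; move: us; rewrite uv (negbTE (side_v v a)).
rewrite -dist_eq0; lia.
Qed.

Lemma lemmaB m c : e m c -> (exists w, (w \in side m c) && major w) ->
  exists a b, [/\ a != b, a \in Wset, b \in Wset, a \in side m c & b \in side m c].
Proof.
move=> emc [w0 hw0].
pose w := [arg max_(w > w0 | (w \in side m c) && major w) dist w m].
have [] : (w \in side m c) && major w /\
   forall u, (u \in side m c) && major u -> dist u m <= dist w m.
  by rewrite /w; case: arg_maxnP => // i Hi Hmax; split => // u /Hmax.
move=> /andP [ws wmaj] wmax; clearbody w.
have nwm : w != m by apply/eqP => wm; move: ws; rewrite wm (negbTE (side_v m c)).
have [p ewp Ep] := dist_parent nwm.
have keyA : forall a, e w a -> a != p -> (a \in Aset w) && (a \in side m c).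
  move=> a ewa nap.
  have nam : a != m.
    apply: contra nap => /eqP am; apply/eqP.
    by apply: (parent_uniq (z := m) ewa ewp); [rewrite am dist0; lia | lia].
  rewrite (side_nbr emc ws ewa nam) andbT inE /Amaj ewa /=.
  apply/forallP => u; apply/implyP => us; apply/negP => umaj.
  have mn : m \notin side w a.
    rewrite inE; apply/negP => H.
    have H' : dist a m < dist w m by rewrite distC (distC w m).
    by move: nap; rewrite (parent_uniq ewa ewp H') ?eqxx // -Ep.
  have Hum := side_far ewa mn us.
  have uc : u \in side m c.
    have ST := side_through ewa us mn; have h1 := dist_tri u w c.
    move: ws ST h1; rewrite !inE; clear; lia.
  have := wmax u; rewrite uc umaj => /(_ isT) H.
  by rewrite (distC u m) (distC w m) in H; have := leq_ltn_trans H Hum; rewrite ltnn.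
pose N := [set y | e w y] :\ p.
have cN : 1 < #|N|.
  have := cardsD1 p [set y | e w y]; rewrite nbrs_card inE ewp /N.
  move: wmaj; rewrite /Defs.major; lia.
have [a [b [aN bN nab]]] := card_gt1P cN.
move: aN bN; rewrite !inE => /andP [nap ewa] /andP [nbp ewb].
have /andP [aA asd] := keyA a ewa nap.
have /andP [bA bsd] := keyA b ewb nbp.
have Qw : Qv w.
  rewrite /Qv wmaj /=; apply: leq_trans cN _; apply: subset_leq_card.
  apply/subsetP => y; rewrite !inE => /andP [nyp ewy].
  by have /andP [] := keyA y ewy nyp; rewrite inE.
exists a, b; split => //; rewrite inE; apply/existsP; exists w; by rewrite Qw.
Qed.


Lemma leaf_in_side v a : e v a -> exists l, (l \in side v a) && leaf l.
Proof.
move=> eva.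
pose l := [arg max_(l > a | l \in side v a) dist l v].
have [] : l \in side v a /\ forall u, u \in side v a -> dist u v <= dist l v.
  by rewrite /l; case: arg_maxnP => //; exact: side_a.
move=> ls lmax; clearbody l; exists l; rewrite ls /=.
have nlv : l != v by apply/eqP => lv; move: ls; rewrite lv (negbTE (side_v v a)).
have [p elp Ep] := dist_parent nlv.
rewrite /leaf /Defs.leaf -nbrs_card; apply/eqP.
have -> : [set y | e l y] = [set p].
  apply/setP => y; rewrite !inE; apply/idP/idP => [ely|/eqP ->//].
  apply/negPn/negP => nyp.
  have Hy := nbr_far (z := v) elp ely (ltac:(lia)) nyp.
  have nyv : y != v by rewrite -dist_eq0 Hy.
  have := lmax y (side_nbr eva ls ely nyv); lia.
by rewrite cards1.
Qed.

Lemma term_of v a l : major v -> Amaj v a -> l \in side v a -> leaf l -> terminal e l v.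
Proof.
move=> vmaj /andP [eva /forallP noM] ls ll.
rewrite /terminal ll vmaj /=; apply/forallP => w; apply/implyP => /andP [wmaj nwv].
have wn : w \notin side v a by apply: contraL wmaj => ws; have := noM w; rewrite ws.
rewrite (side_through eva ls wn); move: nwv; rewrite eq_sym -dist_eq0; lia.
Qed.

Lemma ter_ge v : major v -> #|Aset v| <= ter e v.
Proof.
move=> vmaj.
pose f a := odflt v [pick l | (l \in side v a) && leaf l].
have fP : forall a, a \in Aset v -> (f a \in side v a) && leaf (f a).
  move=> a; rewrite inE => /andP [eva _]; rewrite /f; case: pickP => [l //|none].
  by have [l hl] := leaf_in_side eva; move: (none l); rewrite hl.
rewrite -(@card_in_imset _ _ f (Aset v)); last first.
  move=> a b aA bA fab; apply/eqP; apply/negPn/negP => nab.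
  have /andP [fa _] := fP a aA; have /andP [fb _] := fP b bA.
  move: aA bA; rewrite !inE => /andP [eva _] /andP [evb _].
  by apply: (side_disj eva evb nab fa); rewrite fab.
apply: subset_leq_card; apply/subsetP => l /imsetP [a aA ->].
rewrite inE; have /andP [fa fl] := fP a aA.
by move: aA; rewrite inE => aA; apply: (term_of vmaj aA fa fl).
Qed.

Lemma excl_int v a x : major v -> Amaj v a -> interior_deg2 e x -> x \notin side v a.
Proof.
move=> vmaj vA /andP [_ /forallP H]; apply/negP => xs.
have eva : e v a by case/andP: vA.
have [l /andP [ls ll]] := leaf_in_side eva.
have lt := term_of vmaj vA ls ll.
have /existsP [w /andP [wmaj /eqP onp]] := implyP (H l) (introT existsP (ex_intro _ v lt)).
have wn : w \notin side v a.
  by apply: contraL wmaj => ws; case/andP: vA => _ /forallP /(_ w); rewrite ws.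
have h1 := side_through eva xs wn; have h2 := side_through eva ls wn.
have h3 := inside eva xs; have h4 := inside eva ls.
have h5 := dist_tri x a l.
rewrite (distC w l) in onp; rewrite (distC a l) in h5; lia.
Qed.

Lemma excl_M1 v a v' x : Qv v -> Amaj v a -> in_M1 e v' -> in_Tv e v' x -> x \notin side v a.
Proof.
move=> /andP [vmaj cA] vA /andP [/andP [v'maj _] /eqP ter1] /orP [/eqP ->|].
  by apply: contraL v'maj => ws; case/andP: vA => _ /forallP /(_ v'); rewrite ws.
move=> /existsP [l /andP [lt /eqP onp]]; apply/negP => xs.
have eva : e v a by case/andP: vA.
have v'n : v' \notin side v a.
  by apply: contraL v'maj => ws; case/andP: vA => _ /forallP /(_ v'); rewrite ws.
have nxv : x != v by apply/eqP => xv; move: xs; rewrite xv (negbTE (side_v v a)).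
case: (boolP (l \in side v a)) => ls; last first.
  have h1 := side_through eva xs v'n; have h2 := side_through eva xs ls.
  have h3 := dist_tri v' v l. move: nxv; rewrite -dist_eq0.
  rewrite (distC v' x) (distC v' v) in onp h3; lia.
have ll : leaf l by case/and3P: lt.
have ltv := term_of vmaj vA ls ll.
case: (eqVneq v' v) => [ev|nv].
  rewrite ev in ter1; have := ter_ge vmaj; rewrite ter1 => t1; move: cA t1; clear; lia.
move: lt ltv => /and3P [_ _ /forallP /(_ v)] /implyP; rewrite vmaj eq_sym nv => /(_ isT) h1.
move=> /and3P [_ _ /forallP /(_ v')] /implyP; rewrite v'maj nv => /(_ isT) h2.
move: h1 h2; clear; lia.
Qed.


Lemma parity x y z : (dist x z + dist y z) %% 2 = dist x y %% 2.
Proof.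
move E: (dist y z) => n; elim: n z E => [|n IH] z E.
  by rewrite (dist0_eq E) addn0.
have nyz : y != z by rewrite -dist_eq0 E.
have [w ewz Ew] := dist_parent0 nyz.
have Hw := IH w (succn_inj (etrans Ew E)).
have := nbr_dist x ewz; rewrite (distC z x) (distC w x); lia.
Qed.

Lemma midpoint x y k : k <= dist y x -> exists m, dist m x + k = dist y x /\ dist y m = k.
Proof.
elim: k => [|k IH] hk; first by exists y; rewrite addn0 dist0.
have [m [h1 h2]] := IH (ltnW hk).
have nmx : m != x by rewrite -dist_eq0; lia.
have [m' em Em] := dist_parent nmx.
exists m'; split; first lia.
have := dist_lip2 y em; have := dist_tri y m' x; lia.
Qed.

Lemma distinguished m c x y z : e m c -> (dist c x).+1 = dist m x ->
  dist m x = dist m y -> dist c y = (dist m y).+1 -> z \in side m c ->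
  dist z x < dist z y.
Proof.
move=> emc hcx hxy hcy zs.
have yn : y \notin side m c by rewrite inE (distC y c) (distC y m) hcy; lia.
have h1 := side_through emc zs yn; have h2 := inside emc zs.
have h3 := dist_tri z c x; lia.
Qed.

Lemma major_nbr w : major w -> exists m, e m w.
Proof.
move=> wm; have : 0 < #|[set y | e w y]| by rewrite nbrs_card; move: wm; rewrite /Defs.major; lia.
by case/card_gt0P => m; rewrite inE esym => h; exists m.
Qed.

Lemma three_nbrs m a b c : e m a -> e m b -> e m c -> a != b -> c != a -> c != b ->
  major m.
Proof.
move=> ea eb ec nab nca ncb; rewrite /Defs.major -nbrs_card.
set N := [set y | e m y].
have c1 := cardsD1 a N; have c2 := cardsD1 b (N :\ a).
have c3 : 0 < #|N :\ a :\ b| by apply/card_gt0P; exists c; rewrite !inE nca ncb ec.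
move: c1 c2; rewrite !inE ea eb eq_sym nab /= => c1 c2.
rewrite c1 c2; move: c3; clear; lia.
Qed.

Lemma resolve2 x y : (exists w0, major w0) -> x != y ->
  exists a b, [/\ a != b, a \in Wset, b \in Wset, dist x a != dist y a & dist x b != dist y b].
Proof.
move=> [w0 w0maj] nxy.
case: (boolP (odd (dist x y))) => oddxy.
  have [m emw] := major_nbr w0maj.
  have [|a [b [nab aW bW _ _]]] := lemmaB emw; first by exists w0; rewrite side_a.
  have dd : forall z, dist x z != dist y z.
    move=> z; apply/eqP => E; have := parity x y z; rewrite E addnn modn2 odd_double.
    by rewrite modn2 oddxy.
  by exists a, b; split; rewrite ?dd.
have [h Eh] : exists h, dist x y = h + h.
  by exists (dist x y)./2; rewrite addnn -{1}(odd_double_half (dist x y)) (negbTE oddxy).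
have d0 : dist x y != 0 by rewrite dist_eq0.
have hpos : 0 < h by lia.
have [|m [hm1 hm2]] := @midpoint x y h; first by rewrite distC Eh; lia.
have dmx : dist m x = h by rewrite (distC y x) Eh in hm1; lia.
have dmy : dist m y = h by rewrite distC.
have nmx : m != x by rewrite -dist_eq0; lia.
have nmy : m != y by rewrite -dist_eq0; lia.
have [x' emx' Ex'] := dist_parent nmx.
have [y' emy' Ey'] := dist_parent nmy.
have nxy' : x' != y'.
  apply/eqP => E; rewrite -E in Ey'; have := dist_tri x x' y.
  rewrite (distC x x'); lia.
have hx'y : dist x' y = (dist m y).+1 by apply: (nbr_far emy' emx'); lia.
have hy'x : dist y' x = (dist m x).+1 by apply: (nbr_far emx' emy'); [lia | rewrite eq_sym].
have Dx : forall z, z \in side m x' -> dist x z != dist y z.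
  move=> z zs; have := distinguished emx' Ex' (etrans dmx (Logic.eq_sym dmy)) hx'y zs.
  rewrite (distC z x) (distC z y); lia.
have Dy : forall z, z \in side m y' -> dist x z != dist y z.
  move=> z zs; have := distinguished emy' Ey' (etrans dmy (Logic.eq_sym dmx)) hy'x zs.
  rewrite (distC z x) (distC z y); lia.
case: (boolP [exists w, (w \in side m x') && major w]) => [/existsP hX|hX].
  have [a [b [nab aW bW aS bS]]] := lemmaB emx' hX.
  by exists a, b; split; rewrite ?Dx.
case: (boolP [exists w, (w \in side m y') && major w]) => [/existsP hY|hY].
  have [a [b [nab aW bW aS bS]]] := lemmaB emy' hY.
  by exists a, b; split; rewrite ?Dy.
have noM : forall c, e m c -> ~~ [exists w, (w \in side m c) && major w] -> c \in Aset m.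
  move=> c emc hc; rewrite inE /Amaj emc /=; apply/forallP => u; apply/implyP => us.
  by apply: contra hc => um; apply/existsP; exists u; rewrite us.
have x'A := noM x' emx' hX; have y'A := noM y' emy' hY.
case: (boolP (major m)) => mmaj.
  have Qm : Qv m by rewrite /Qv mmaj /=; apply/card_gt1P; exists x', y'.
  have inW : forall c, c \in Aset m -> c \in Wset.
    by move=> c cA; rewrite inE; apply/existsP; exists m; rewrite Qm cA.
  exists x', y'; split; rewrite ?inW //.
    by rewrite Dx // side_a.
  by rewrite Dy // side_a.
have nw0m : m != w0 by apply: contraNneq mmaj => ->.
have [c emc Ec] := dist_parent nw0m.
have w0s : w0 \in side m c by rewrite inE (distC w0 c) (distC w0 m) -Ec ltnSn.
have : (c == x') || (c == y').
  apply/negPn/negP; rewrite negb_or => /andP [ncx ncy].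
  by move: mmaj; rewrite (three_nbrs emx' emy' emc nxy' ncx ncy).
case/orP => /eqP ec; rewrite ec in w0s.
  by move: hX; rewrite negb_exists => /forallP /(_ w0); rewrite w0s w0maj.
by move: hY; rewrite negb_exists => /forallP /(_ w0); rewrite w0s w0maj.
Qed.


Section Sums.
Variable (R : realType).
Implicit Types (g : T -> R).

Lemma sum_sub g (P Q : pred T) : (forall z, 0 <= g z)%R -> (forall z, P z -> Q z) ->
  (\sum_(z | P z) g z <= \sum_(z | Q z) g z)%R.
Proof.
move=> g0 PQ; rewrite [X in (_ <= X)%R](bigID P) /=.
rewrite (eq_bigl P); last by move=> z /=; case Pz: (P z); rewrite ?andbT ?andbF ?PQ.
by rewrite lerDl; apply: sumr_ge0.
Qed.

Lemma sum_or g (P Q : pred T) : (forall z, 0 <= g z)%R ->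
  (\sum_(z | P z || Q z) g z <= \sum_(z | P z) g z + \sum_(z | Q z) g z)%R.
Proof.
move=> g0; rewrite (bigID P) /=.
rewrite (eq_bigl P); last first.
  by move=> z /=; case: (P z); rewrite ?andbF.
rewrite lerD2l; apply: sum_sub => // z /andP [/orP [Pz|//] nPz].
by rewrite Pz in nPz.
Qed.

Lemma sum_two g (P : pred T) a b : (forall z, 0 <= g z)%R -> a != b -> P a -> P b ->
  (g a + g b <= \sum_(z | P z) g z)%R.
Proof.
move=> g0 nab Pa Pb; rewrite (bigD1 a) //= lerD2l (bigD1 b) /=; last by rewrite Pb eq_sym nab.
by rewrite lerDl; apply: sumr_ge0.
Qed.

Lemma sum_le1 (I : finType) (P : pred I) (c : R) : (0 <= c)%R ->
  (forall i j, P i -> P j -> i = j) -> (\sum_(i | P i) c <= c)%R.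
Proof.
move=> c0 H; case: (pickP P) => [i Pi|none].
  rewrite (bigD1 i) //= big1 ?addr0 // => j /andP [Pj nji].
  by rewrite (H _ _ Pj Pi) eqxx in nji.
by rewrite big_pred0.
Qed.

Lemma per_v (G : T -> R) (A : {set T}) : 1 < #|A| -> (forall a, 0 <= G a)%R ->
  (forall a b, a \in A -> b \in A -> a != b -> 1 <= G a + G b)%R ->
  (\sum_(a in A) (1/2) <= \sum_(a in A) G a)%R.
Proof.
move=> cA G0 H.
case: (boolP [exists m, (m \in A) && (G m <= 1/2)%R]) => [/existsP [m /andP [mA Gm]]|hall].
  rewrite (big_setD1 m mA) (big_setD1 m mA) /=.
  have ck := cardsD1 m A; rewrite mA in ck.
  have le1 : (\sum_(a in A :\ m) (1 - G m) <= \sum_(a in A :\ m) G a)%R.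
    apply: ler_sum => a; rewrite !inE => /andP [nam aA].
    have := H a m aA mA nam; lra.
  move: le1; rewrite !sumr_const.
  set k := #|A :\ m|.
  have k1 : (1 <= k%:R :> R)%R by rewrite ler1n; lia.
  rewrite -[((1 - G m) *+ k)%R]mulr_natl -[((1/2) *+ k)%R]mulr_natl => le1.
  have hp : (0 <= (k%:R - 1) * (1/2 - G m) :> R)%R.
    by apply: mulr_ge0; rewrite subr_ge0.
  move: le1 hp; set S := (\sum_(a in A :\ m) G a)%R; set t := G m; set kk := (k%:R : R)%R.
  clear; move=> le1 hp; nra.
apply: ler_sum => a aA; move: hall; rewrite negb_exists => /forallP /(_ a).
by rewrite aA /= -ltNge => /ltW.
Qed.

End Sums.


Lemma side_uniq p q z : Qv p.1 -> p.2 \in Aset p.1 -> Qv q.1 -> q.2 \in Aset q.1 ->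
  z \in side p.1 p.2 -> z \in side q.1 q.2 -> p = q.
Proof.
case: p => v a; case: q => v' a' /= /andP [vmaj _]; rewrite inE => /andP [eva /forallP nA].
move=> /andP [v'maj _]; rewrite inE => /andP [eva' /forallP nA'] zs zs'.
have v'n : v' \notin side v a by apply: contraL v'maj => h; have := nA v'; rewrite h.
have vn : v \notin side v' a' by apply: contraL vmaj => h; have := nA' v; rewrite h.
have h1 := side_through eva zs v'n; have h2 := side_through eva' zs' vn.
have vv : v = v' by apply: dist0_eq; rewrite (distC v' v) in h2; lia.
subst v'; case: (eqVneq a a') => [->//|naa].
by case: (side_disj eva eva' naa zs zs').
Qed.

Lemma main_in (R : realType) (g : T -> R) : (exists w0, major w0) ->
  min_resolving e g -> forall x,
  (forall v a, Qv v -> a \in Aset v -> x \notin side v a) -> g x = 0%R.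
Proof.
move=> hmaj [[g01 gres] gmin] x xout.
have g0 : forall z, (0 <= g z)%R by move=> z; case/andP: (g01 z).
pose PP (p : T * T) := Qv p.1 && (p.2 \in Aset p.1).
pose h0 (z : T) : R := if z \in Wset then (1/2)%R else 0%R.
have h00 : forall z, (0 <= h0 z)%R by move=> z; rewrite /h0; case: ifP => _; lra.
have h0res : resolving e h0.
  split; first by move=> z; rewrite /h0; case: ifP => _; apply/andP; split; lra.
  move=> u w nuw; have [a [b [nab aW bW da db]]] := resolve2 hmaj nuw.
  apply: le_trans (sum_two (P := fun z => dist u z != dist w z) h00 nab da db).
  by rewrite /h0 aW bW; lra.
have S1 := gmin h0 h0res.
have S2 : (\sum_z h0 z <= \sum_(p | PP p) (1/2 : R)%R)%R.
  rewrite (eq_bigr (fun p : T * T => (\sum_(z | z == p.2) (1/2 : R))%R)); last first.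
    by move=> p _; rewrite big_pred1_eq.
  rewrite (exchange_big_dep predT) //=; apply: ler_sum => z _.
  rewrite /h0; case: ifP => zW; last by apply: sumr_ge0 => *; lra.
  move: zW; rewrite inE => /existsP [v /andP [Qv_ zA]].
  rewrite (bigD1 (v, z)) /=; last by rewrite /PP /= Qv_ zA eqxx.
  by rewrite lerDl; apply: sumr_ge0 => *; lra.
have S3 : (\sum_(p | PP p) (1/2 : R)%R <= \sum_(p | PP p) \sum_(z in side p.1 p.2) g z)%R.
  rewrite -(pair_big_dep (fun v => Qv v) (fun v a => a \in Aset v)
             (fun v a => (1/2 : R)%R)) /=.
  rewrite -(pair_big_dep (fun v => Qv v) (fun v a => a \in Aset v)
             (fun v a => (\sum_(z in side v a) g z)%R)) /=.
  apply: ler_sum => v Qv_.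
  apply: per_v; first by case/andP: Qv_.
    by move=> a; apply: sumr_ge0.
  move=> a b; rewrite !inE => /andP [eva _] /andP [evb _] nab.
  apply: le_trans (gres a b nab) _.
  apply: le_trans (@sum_or R g (fun z => z \in side v a) (fun z => z \in side v b) g0).
  apply: sum_sub => // z; apply: contraR; rewrite negb_or => /andP [za zb].
  by rewrite (distC a z) (distC b z) (notside eva za) (notside evb zb).
have S4 : (\sum_(p | PP p) \sum_(z in side p.1 p.2) g z <= \sum_z g z - g x)%R.
  rewrite (exchange_big_dep predT) //=.
  rewrite [X in (_ <= X - _)%R](bigD1 x) //= (bigD1 x) //=.
  rewrite big1; last first.
    move=> p /andP [/andP [Qp Ap] xs].
    by move: (xout _ _ Qp Ap); rewrite xs.
  rewrite add0r (addrC (g x)) addrK; apply: ler_sum => z _.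
  apply: sum_le1 => // p q /andP [/andP [Qp Ap] zp] /andP [/andP [Qq Aq] zq].
  exact: (side_uniq Qp Ap Qq Aq zp zq).
have := g0 x; lra.
Qed.

End TreeFacts.

Theorem corollary3p14 (R : realType) (T : finType) (e : rel T) :
  is_tree e -> 1 <= ex_T e ->
  forall g : T -> R, min_resolving e g ->
  forall x : T,
    major e x || interior_deg2 e x || [exists v, in_M1 e v && in_Tv e v x] ->
    g x = 0%R.
Proof.
move=> [[esym eirr] econn eacyc] hex g gmin x hx.
have hmaj : exists w0, major e w0.
  move: hex; rewrite /ex_T => /card_gt0P [v]; rewrite inE => /andP [vm _].
  by exists v.
apply: (main_in esym eirr econn eacyc hmaj gmin) => v a Qv_ aA.
have vmaj : major e v by case/andP: Qv_.
have vA : Amaj e v a by move: aA; rewrite inE.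
case/orP: hx => [/orP [xm|xi]|/existsP [v' /andP [v'M xT]]].
- apply: contraL xm => xs; case/andP: vA => _ /forallP /(_ x); rewrite xs; exact.
- exact: (excl_int esym eirr econn eacyc vmaj vA xi).
- exact: (excl_M1 esym eirr econn eacyc Qv_ vA v'M xT).
Qed.
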